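(* Let $\mathcal P$ be a compact subset of $\mathcal W$ and let $P(1),P(2),P(3),\ldots$ be a sequence of matrices from $\mathcal P$. Suppose $j_1<j_2<\cdots$ is an infinite increasing sequence of indices such that each $P(j_r)$ is a Sarymsakov matrix (i.e., $P(j_r)\in\mathcal S_1$) and the set $\bigcup_{r\ge1}\{P(j_r)\}$ is compact. If there exists an integer $T$ such that $j_{r+1}-j_r\le T$ for all $r\ge1$, then $P(k)\cdots P(2)P(1)$ converges as $k\to\infty$ to a rank-one matrix of the form $\mathbf 1c^T$ with $c_i\ge0$ and $\sum_i c_i=1$.
   Context: Let $\mathcal N=\{1,\ldots,n\}$; all matrices are $n\times n$. A matrix is stochastic if it is entrywise nonnegative with row sums $1$. For stochastic $P$ and $\mathcal A\subseteq\mathcal N$, $F_P(\mathcal A)=\{j:\ p_{ij}>0\text{ for some } i\in\mathcal A\}$. $\mathcal S_1$ (Sarymsakov matrices) is the set of stochastic $P$ such that for any disjoint nonempty $\mathcal A,\tilde{\mathcal A}\subseteq\mathcal N$, either $F_P(\mathcal A)\cap F_P(\tilde{\mathcal A})\neq\emptyset$, or $F_P(\mathcal A)\cap F_P(\tilde{\mathcal A})=\emptyset$ and $|F_P(\mathcal A)\cup F_P(\tilde{\mathcal A})|>|\mathcal A\cup\tilde{\mathcal A}|$. $\mathcal W$ is the set of stochastic $P$ such that for any disjoint nonempty $\mathcal A,\tilde{\mathcal A}\subseteq\mathcal N$, either $F_P(\mathcal A)\cap F_P(\tilde{\mathcal A})\neq\emptyset$, or $F_P(\mathcal A)\cap F_P(\tilde{\mathcal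 A})=\emptyset$ and $|F_P(\mathcal A)\cup F_P(\tilde{\mathcal A})|\ge|\mathcal A\cup\tilde{\mathcal A}|$. $\mathbf 1$ is the all-ones column vector. *)

(* Defs.v *)
From mathcomp Require Import all_boot.
From Stdlib Require Import Reals.
Set Implicit Arguments. Unset Strict Implicit. Unset Printing Implicit Defensive.

Definition Mat (n : nat) := 'I_n -> 'I_n -> R.

Definition rsum (n : nat) (f : 'I_n -> R) : R := \big[Rplus/R0]_(k : 'I_n) f k.

Definition mmul (n : nat) (A B : Mat n) : Mat n :=
  fun i j => rsum (fun k => (A i k * B k j)%R).

Definition idm (n : nat) : Mat n := fun i j => if i == j then R1 else R0.

Fixpoint lprod (n : nat) (P : nat -> Mat n) (k : nat) : Mat n :=
  match k with
  | O => @idm n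
  | S k' => mmul (P k) (lprod P k')
  end.

Definition stochastic (n : nat) (P : Mat n) : Prop :=
  (forall i j, (0 <= P i j)%R) /\ (forall i, rsum (fun j => P i j) = R1).

Definition posb (x : R) : bool := if Rlt_dec R0 x then true else false.
Definition Fset (n : nat) (P : Mat n) (A : {set 'I_n}) : {set 'I_n} :=
  [set j | [exists i in A, posb (P i j)]].

Definition Sarymsakov (n : nat) (P : Mat n) : Prop :=
  stochastic P /\
  forall A B : {set 'I_n}, A != set0 -> B != set0 -> [disjoint A & B] ->
    (Fset P A :&: Fset P B != set0) \/
    (Fset P A :&: Fset P B = set0 /\ (#|A :|: B| < #|Fset P A :|: Fset P B|)%N).

Definition classW (n : nat) (P : Mat n) : Prop :=
  stochastic P /\
  forall A B : {set 'I_n}, A != set0 -> B != set0 -> [disjoint A & B] ->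
    (Fset P A :&: Fset P B != set0) \/
    (Fset P A :&: Fset P B = set0 /\ (#|A :|: B| <= #|Fset P A :|: Fset P B|)%N).

(* Compactness of a set of matrices in R^{n x n} (a metric space), stated as
   sequential compactness w.r.t. entrywise convergence. *)
Definition mat_compact (n : nat) (S : Mat n -> Prop) : Prop :=
  forall u : nat -> Mat n, (forall k, S (u k)) ->
    exists phi : nat -> nat, (forall k, (phi k < phi k.+1)%N) /\
    exists L : Mat n, S L /\ forall i j, Un_cv (fun k => u (phi k) i j) (L i j).

(* Main.v *)
From HB Require Import structures.
Require Import Defs.
From mathcomp Require Import all_boot.
From Stdlib Require Import Reals Lra Lia Classical IndefiniteDescription.
From mathcomp Require Import zify.
Set Implicit Arguments. Unset Strict Implicit. Unset Printing Implicit Defensive.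

Lemma Rplus_assoc' : associative Rplus. Proof. move=> *; ring. Qed.
HB.instance Definition _ := Monoid.isComLaw.Build R R0 Rplus Rplus_assoc' Rplus_comm Rplus_0_l.

Open Scope R_scope.

Lemma Rplus_le_compat_l_0 a b : 0 <= b -> a <= a + b. Proof. lra. Qed.
Section Sums.
Variable n : nat.
Implicit Types f g : 'I_n -> R.

Lemma bsum_ge0 (I : Type) (r : seq I) (p : pred I) (F : I -> R) :
  (forall i, 0 <= F i) -> 0 <= \big[Rplus/R0]_(i <- r | p i) F i.
Proof. move=> H; apply: (big_ind (fun x => 0 <= x)) => //; [lra| move=> x y; lra]. Qed.

Lemma rsum_ge0 f : (forall i, 0 <= f i) -> 0 <= rsum f.
Proof. exact: bsum_ge0. Qed.

Lemma rsum_le f g : (forall i, f i <= g i) -> rsum f <= rsum g.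
Proof. move=> H; apply: (big_ind2 (fun x y => x <= y)) => //; [lra| move=> *; lra]. Qed.

Lemma rsum_term f k : (forall i, 0 <= f i) -> f k <= rsum f.
Proof.
move=> H; rewrite /rsum (bigD1 k) //=.
apply: Rplus_le_compat_l_0; exact: bsum_ge0.
Qed.

Lemma bsum_plus (I : Type) (r : seq I) (F G : I -> R) :
  \big[Rplus/R0]_(i <- r) (F i + G i) = \big[Rplus/R0]_(i <- r) F i + \big[Rplus/R0]_(i <- r) G i.
Proof. elim: r => [|x r IH]; rewrite ?big_nil ?big_cons ?IH; lra. Qed.

Lemma bsum_scal (I : Type) (r : seq I) (c : R) (F : I -> R) :
  \big[Rplus/R0]_(i <- r) (c * F i) = c * \big[Rplus/R0]_(i <- r) F i.
Proof. elim: r => [|x r IH]; rewrite ?big_nil ?big_cons ?IH; ring. Qed.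

Lemma rsum_plus f g : rsum (fun i => f i + g i) = rsum f + rsum g.
Proof. exact: bsum_plus. Qed.
Lemma rsum_scal c f : rsum (fun i => c * f i) = c * rsum f.
Proof. exact: bsum_scal. Qed.
Lemma rsum_ext f g : (forall i, f i = g i) -> rsum f = rsum g.
Proof. by move=> H; apply: eq_bigr. Qed.
Lemma rsum_swap (F : 'I_n -> 'I_n -> R) :
  rsum (fun i => rsum (fun j => F i j)) = rsum (fun j => rsum (fun i => F i j)).
Proof. exact: exchange_big. Qed.

Lemma rsum_delta (i : 'I_n) (v : 'I_n -> R) : rsum (fun l => idm i l * v l) = v i.
Proof.
rewrite /rsum (bigD1 i) //= /idm eqxx big1 /=; first ring.
by move=> l /negbTE; rewrite eq_sym => ->; ring.
Qed.

Lemma rsum_const c : rsum (fun _ : 'I_n => c) = INR n * c.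
Proof.
rewrite /rsum big_const_ord; elim: n => [|m IH]; first by rewrite /=; ring.
rewrite iterS IH S_INR; ring.
Qed.

Lemma bsum_cv (I : Type) (r : seq I) (u : nat -> I -> R) (c : I -> R) :
  (forall i, Un_cv (fun t => u t i) (c i)) ->
  Un_cv (fun t => \big[Rplus/R0]_(i <- r) u t i) (\big[Rplus/R0]_(i <- r) c i).
Proof.
move=> H; elim: r => [|x r IH].
  rewrite big_nil; move=> e he; exists 0%nat => t _; rewrite big_nil /R_dist Rminus_0_r Rabs_R0 //.
rewrite big_cons; have := CV_plus _ _ _ _ (H x) IH.
by apply: Un_cv_ext => t; rewrite big_cons.
Qed.
End Sums.

Section Mats.
Variable n : nat.
Implicit Types M : Mat n.

Lemma idm_stoch : stochastic (@idm n).
Proof.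
split; first by move=> i j; rewrite /idm; case: (i == j); lra.
move=> i; have := rsum_delta i (fun _ => 1); rewrite /rsum.
under eq_bigr do rewrite Rmult_1_r; by [].
Qed.

Lemma mmul_stoch M N : stochastic M -> stochastic N -> stochastic (mmul M N).
Proof.
move=> [M0 M1] [N0 N1]; split.
  move=> i j; apply: rsum_ge0 => k; apply: Rmult_le_pos; auto.
move=> i; rewrite /mmul rsum_swap.
rewrite (rsum_ext (g := fun k => M i k)) ?M1 // => k.
rewrite rsum_scal N1; ring.
Qed.

Lemma stoch_ub M (v : 'I_n -> R) b i : stochastic M -> (forall l, v l <= b) ->
  rsum (fun l => M i l * v l) <= b.
Proof.
move=> [M0 M1] H.
have : rsum (fun l => M i l * v l) <= rsum (fun l => M i l * b).
  apply: rsum_le => l; apply: Rmult_le_compat_l; auto.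
rewrite (rsum_ext (f := fun l => M i l * b) (g := fun l => b * M i l)); last by move=> l; ring.
rewrite rsum_scal M1; lra.
Qed.

Lemma stoch_lb M (v : 'I_n -> R) a i : stochastic M -> (forall l, a <= v l) ->
  a <= rsum (fun l => M i l * v l).
Proof.
move=> [M0 M1] H.
have : rsum (fun l => M i l * a) <= rsum (fun l => M i l * v l).
  apply: rsum_le => l; apply: Rmult_le_compat_l; auto.
rewrite (rsum_ext (f := fun l => M i l * a) (g := fun l => a * M i l)); last by move=> l; ring.
rewrite rsum_scal M1; lra.
Qed.

Lemma contract M (v : 'I_n -> R) a b g i i' : stochastic M ->
  (forall l, a <= v l <= b) -> (exists l, g <= M i l /\ g <= M i' l) ->
  rsum (fun l => M i l * v l) - rsum (fun l => M i' l * v l) <= (1 - g) * (b - a).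
Proof.
move=> [M0 M1] H [l0 [g1 g2]].
have E1 : b - rsum (fun l => M i l * v l) = rsum (fun l => M i l * (b - v l)).
  rewrite (rsum_ext (f := fun l => M i l * (b - v l)) (g := fun l => b * M i l + (-1) * (M i l * v l))); last by move=> l; ring.
  rewrite rsum_plus rsum_scal rsum_scal M1; ring.
have E2 : rsum (fun l => M i' l * v l) - a = rsum (fun l => M i' l * (v l - a)).
  rewrite (rsum_ext (f := fun l => M i' l * (v l - a)) (g := fun l => M i' l * v l + (- a) * M i' l)); last by move=> l; ring.
  rewrite rsum_plus rsum_scal M1; ring.
have T1 := rsum_term (f := fun l => M i l * (b - v l)) l0.
have T2 := rsum_term (f := fun l => M i' l * (v l - a)) l0.
have h1 : M i l0 * (b - v l0) <= rsum (fun l => M i l * (b - v l)).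
  apply: T1 => l; apply: Rmult_le_pos; [auto | have := H l; lra].
have h2 : M i' l0 * (v l0 - a) <= rsum (fun l => M i' l * (v l - a)).
  apply: T2 => l; apply: Rmult_le_pos; [auto | have := H l; lra].
have := H l0 => hl.
have h3 : g * (b - v l0) <= M i l0 * (b - v l0) by apply: Rmult_le_compat_r; lra.
have h4 : g * (v l0 - a) <= M i' l0 * (v l0 - a) by apply: Rmult_le_compat_r; lra.
nra.
Qed.

Lemma row_big M i : stochastic M -> exists l, / (INR n + 1) <= M i l.
Proof.
move=> [M0 M1]; apply: NNPP => Hc.
have H : forall l, M i l <= / (INR n + 1).
  move=> l; apply: Rnot_lt_le => Hl; apply: Hc; exists l; lra.
have := rsum_le (f := fun l => M i l) (g := fun _ => / (INR n + 1)) H.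
rewrite rsum_const M1 => h.
have hn := pos_INR n.
have : INR n * / (INR n + 1) < 1.
  apply: (Rmult_lt_reg_r (INR n + 1)); first lra.
  rewrite Rmult_assoc Rinv_l; lra.
lra.
Qed.

End Mats.

Definition geb (d x : R) : bool := if Rle_dec d x then true else false.
Definition Fd (n : nat) (M : Mat n) (d : R) (A : {set 'I_n}) : {set 'I_n} :=
  [set j | [exists i in A, geb d (M i j)]].

Lemma fin_ev (X : finType) (Q : X -> nat -> Prop) :
  (forall x, exists K, forall k, (K <= k)%nat -> Q x k) -> exists K, forall x k, (K <= k)%nat -> Q x k.
Proof.
move=> H; have [f Hf] := fin_all_exists H.
exists (\max_x f x)%nat => x k hk; apply: Hf; apply: leq_trans hk; exact: leq_bigmax.
Qed.

Lemma fin_min (X : finType) (Q : X -> R -> Prop) :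
  (forall x d d', Q x d -> 0 < d' -> d' <= d -> Q x d') ->
  (forall x, exists d, 0 < d /\ Q x d) -> exists d, 0 < d /\ forall x, Q x d.
Proof.
move=> Hm H.
suff: forall s : seq X, exists d, 0 < d /\ forall x, x \in s -> Q x d.
  case/(_ (enum X)) => d [d0 Hd]; exists d; split => // x; apply: Hd; by rewrite mem_enum.
elim => [|x s [d [d0 Hd]]]; first by exists 1; split; [lra|].
have [dx [dx0 Hx]] := H x.
have hm : 0 < Rmin dx d by apply: Rmin_pos.
exists (Rmin dx d); split => // y; rewrite in_cons => /orP [/eqP -> | ys].
  by apply: Hm Hx _ _ => //; apply: Rmin_l.
by apply: Hm (Hd y ys) _ _ => //; apply: Rmin_r.
Qed.

Lemma phi_ge (phi : nat -> nat) : (forall k, (phi k < phi k.+1)%nat) -> forall k, (k <= phi k)%nat.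
Proof. move=> H; elim => [|k IH] //; exact: leq_ltn_trans IH (H k). Qed.

Section Thr.
Variable n : nat.

Lemma in_Fd (M : Mat n) d (A : {set 'I_n}) j : reflect (exists i, i \in A /\ d <= M i j) (j \in Fd M d A).
Proof.
rewrite inE; apply: (iffP existsP) => [[i /andP [iA]]|[i [iA h]]].
  by rewrite /geb; case: Rle_dec => // h _; exists i.
by exists i; rewrite iA /geb; case: Rle_dec.
Qed.

Lemma in_Fset (M : Mat n) (A : {set 'I_n}) j : reflect (exists i, i \in A /\ 0 < M i j) (j \in Fset M A).
Proof.
rewrite inE; apply: (iffP existsP) => [[i /andP [iA]]|[i [iA h]]].
  by rewrite /posb; case: Rlt_dec => // h _; exists i.
by exists i; rewrite iA /posb; case: Rlt_dec.
Qed.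

Lemma Fd_mono_d (M : Mat n) d d' (A : {set 'I_n}) : d' <= d -> Fd M d A \subset Fd M d' A.
Proof.
move=> h; apply/subsetP => j /in_Fd [i [iA hi]]; apply/in_Fd; exists i; split => //; lra.
Qed.

Lemma Fd_mono_A (M : Mat n) d (A B : {set 'I_n}) : A \subset B -> Fd M d A \subset Fd M d B.
Proof.
move=> h; apply/subsetP => j /in_Fd [i [iA hi]]; apply/in_Fd; exists i; split => //.
exact: (subsetP h).
Qed.

Definition Qp (S : Mat n -> Prop) (Rl : nat -> nat -> Prop) (A B : {set 'I_n}) (d : R) :=
  forall M, S M -> forall d', 0 < d' -> d' <= d -> A != set0 -> B != set0 -> [disjoint A & B] ->
  Fd M d' A :&: Fd M d' B = set0 -> Rl #|A :|: B| #|Fd M d' A :|: Fd M d' B|.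

Lemma thr_pair (S : Mat n -> Prop) (Rl : nat -> nat -> Prop)
 (Rmono : forall a b b', Rl a b -> (b <= b')%nat -> Rl a b')
 (HS : mat_compact S)
 (Hprop : forall M, S M -> forall A B : {set 'I_n}, A != set0 -> B != set0 -> [disjoint A & B] ->
    Fset M A :&: Fset M B = set0 -> Rl #|A :|: B| #|Fset M A :|: Fset M B|)
 (A B : {set 'I_n}) : exists d, 0 < d /\ Qp S Rl A B d.
Proof.
apply: NNPP => Hc.
have Hseq : forall N : nat, exists p : Mat n * R, S p.1 /\ 0 < p.2 /\ p.2 <= / (INR N + 1) /\
   A != set0 /\ B != set0 /\ [disjoint A & B] /\ Fd p.1 p.2 A :&: Fd p.1 p.2 B = set0 /\
   ~ Rl #|A :|: B| #|Fd p.1 p.2 A :|: Fd p.1 p.2 B|.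
  move=> N; apply: NNPP => HN; apply: Hc; exists (/(INR N + 1)); split.
    by apply: Rinv_0_lt_compat; have := pos_INR N; lra.
  move=> M SM d' d0 dle nA nB dAB hI; apply: NNPP => hR; apply: HN; exists (M, d'); simpl.
  by repeat split.
pose u N := proj1_sig (constructive_indefinite_description _ (Hseq N)).
have Hu : forall N, S (u N).1 /\ 0 < (u N).2 /\ (u N).2 <= / (INR N + 1) /\
   A != set0 /\ B != set0 /\ [disjoint A & B] /\ Fd (u N).1 (u N).2 A :&: Fd (u N).1 (u N).2 B = set0 /\
   ~ Rl #|A :|: B| #|Fd (u N).1 (u N).2 A :|: Fd (u N).1 (u N).2 B|.
  by move=> N; exact: (proj2_sig (constructive_indefinite_description _ (Hseq N))).
have [_ [_ [_ [nA [nB [dAB _]]]]]] := Hu 0%nat.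
have [phi [Hphi [L [SL HL]]]] := HS (fun N => (u N).1) (fun N => proj1 (Hu N)).
have HLp := Hprop L SL A B nA nB dAB.
have ev1 : forall (X : {set 'I_n}) (j0 : 'I_n), exists K, forall k, (K <= k)%nat ->
    j0 \in Fset L X -> j0 \in Fd (u (phi k)).1 (u (phi k)).2 X.
  move=> X j0; case: (boolP (j0 \in Fset L X)) => hj; last first.
    by exists 0%nat => k _ h; case/negP: hj.
  have [i [iX Lp]] := in_Fset _ _ _ hj.
  have [K1 HK1] := HL i j0 (L i j0 / 2) ltac:(lra).
  have [K2 [HK2 K2p]] := archimed_cor1 (L i j0 / 2) ltac:(lra).
  exists (maxn K1 K2) => k hk _; apply/in_Fd; exists i; split => //.
  have hk1 : (K1 <= k)%nat by exact: leq_trans (leq_maxl _ _) hk.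
  have hk2 : (K2 <= phi k)%nat by exact: leq_trans (leq_trans (leq_maxr _ _) hk) (phi_ge Hphi k).
  have := HK1 k (leP hk1); rewrite /Rdist => /Rabs_def2 [h1 h2].
  have [_ [d0 [dle _]]] := Hu (phi k).
  have i1 : INR K2 <= INR (phi k) by apply: le_INR; apply/leP.
  have i0 : 0 < INR K2 by apply: lt_0_INR.
  have : / (INR (phi k) + 1) <= / INR K2 by apply: Rinv_le_contravar; lra.
  lra.
have ev2 : forall j0 : 'I_n, exists K, forall k, (K <= k)%nat ->
    (j0 \in Fset L A -> j0 \in Fd (u (phi k)).1 (u (phi k)).2 A) /\
    (j0 \in Fset L B -> j0 \in Fd (u (phi k)).1 (u (phi k)).2 B).
  move=> j0; have [K1 h1] := ev1 A j0; have [K2 h2] := ev1 B j0.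
  exists (maxn K1 K2) => k hk; split.
    by apply: h1; exact: leq_trans (leq_maxl _ _) hk.
  by apply: h2; exact: leq_trans (leq_maxr _ _) hk.
have [K HK] := fin_ev ev2.
have sA : Fset L A \subset Fd (u (phi K)).1 (u (phi K)).2 A.
  by apply/subsetP => x hx; apply: (proj1 (HK x K (leqnn K))).
have sB : Fset L B \subset Fd (u (phi K)).1 (u (phi K)).2 B.
  by apply/subsetP => x hx; apply: (proj2 (HK x K (leqnn K))).
have [_ [_ [_ [_ [_ [_ [hI hR]]]]]]] := Hu (phi K).
apply: hR; apply: Rmono; last exact: subset_leq_card (setUSS sA sB).
apply: HLp; apply/eqP; rewrite -subset0 -hI; exact: setISS.
Qed.

End Thr.

Lemma nat_contra a b c : (1 <= a)%nat -> (a + c <= b)%nat -> (b <= c)%nat -> False.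
Proof. lia. Qed.

Section Window.
Variable n : nat.
Variable P : nat -> Mat n.
Variable d : R.
Hypothesis Hd0 : 0 < d.
Hypothesis Hd1 : d <= / (INR n + 1).
Hypothesis HPst : forall t, (1 <= t)%nat -> stochastic (P t).
Hypothesis TW : forall t, (1 <= t)%nat -> forall A B : {set 'I_n}, A != set0 -> B != set0 -> [disjoint A & B] ->
  Fd (P t) d A :&: Fd (P t) d B = set0 -> (#|A :|: B| <= #|Fd (P t) d A :|: Fd (P t) d B|)%nat.
Variable isS : nat -> Prop.
Hypothesis TS : forall t, isS t -> forall A B : {set 'I_n}, A != set0 -> B != set0 -> [disjoint A & B] ->
  Fd (P t) d A :&: Fd (P t) d B = set0 -> (#|A :|: B| < #|Fd (P t) d A :|: Fd (P t) d B|)%nat.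

Fixpoint wprod (s m : nat) : Mat n :=
  match m with O => @idm n | S m' => mmul (P (s + m'.+1)) (wprod s m') end.
Fixpoint reach (s m : nat) (A : {set 'I_n}) : {set 'I_n} :=
  match m with O => A | S m' => reach s m' (Fd (P (s + m'.+1)) d A) end.

Lemma wprod_stoch s m : stochastic (wprod s m).
Proof.
elim: m => [|m IH] /=; first exact: idm_stoch.
apply: mmul_stoch => //; apply: HPst; by rewrite addnS.
Qed.

Lemma lprod_split s m i k :
  lprod P (s + m) i k = rsum (fun l => wprod s m i l * lprod P s l k).
Proof.
elim: m i => [|m IH] i.
  by rewrite addn0; symmetry; exact: (rsum_delta i (fun l => lprod P s l k)).
rewrite addnS /=; have -> : ((s + m).+1 = s + m.+1)%nat by rewrite addnS.
rewrite /mmul.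
transitivity (rsum (fun x => rsum (fun l => P (s + m.+1) i x * wprod s m x l * lprod P s l k))).
  apply: rsum_ext => x; rewrite IH -rsum_scal; apply: rsum_ext => l; ring.
rewrite rsum_swap; apply: rsum_ext => l; rewrite [RHS]Rmult_comm -rsum_scal.
apply: rsum_ext => x; ring.
Qed.

Lemma Fd_ne (M : Mat n) (A : {set 'I_n}) : stochastic M -> A != set0 -> Fd M d A != set0.
Proof.
move=> HM /set0Pn [i iA]; have [l hl] := row_big i HM.
by apply/set0Pn; exists l; apply/in_Fd; exists i; split => //; lra.
Qed.

Lemma Fd_meet (M : Mat n) (A B : {set 'I_n}) : stochastic M -> A :&: B != set0 ->
  Fd M d A :&: Fd M d B != set0.
Proof.
move=> HM /set0Pn [x]; rewrite inE => /andP [xA xB].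
have hx : [set x] != set0 by apply/set0Pn; exists x; exact: set11.
have /set0Pn [y hy] := Fd_ne HM hx.
apply/set0Pn; exists y; rewrite inE; apply/andP; split.
  by apply: (subsetP (Fd_mono_A M d (A := [set x]) _)) hy; rewrite sub1set.
by apply: (subsetP (Fd_mono_A M d (A := [set x]) _)) hy; rewrite sub1set.
Qed.


Lemma Pst s m : stochastic (P (s + m.+1)).
Proof. by apply: HPst; rewrite addnS. Qed.

Lemma reach_ne s m (A : {set 'I_n}) : A != set0 -> reach s m A != set0.
Proof. elim: m A => [|m IH] A //= hA; apply: IH; exact: Fd_ne (Pst s m) hA. Qed.

Lemma reach_meet s m (A B : {set 'I_n}) : A :&: B != set0 -> reach s m A :&: reach s m B != set0.
Proof. elim: m A B => [|m IH] A B //= h; apply: IH; exact: Fd_meet (Pst s m) h. Qed.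

Lemma reach_prod s m (A : {set 'I_n}) l : l \in reach s m A -> exists i, i \in A /\ d ^ m <= wprod s m i l.
Proof.
elim: m A l => [|m IH] A l /=.
  by move=> hl; exists l; split => //; rewrite /idm eqxx /=; lra.
move=> /IH [x [/in_Fd [i [iA hi]] hx]]; exists i; split => //.
rewrite /mmul.
have hw := wprod_stoch s m; have hp := Pst s m.
apply: Rle_trans (rsum_term (f := fun y => P (s + m.+1) i y * wprod s m y l) x _).
  apply: Rmult_le_compat => //; [lra | apply: pow_le; lra].
by move=> y; apply: Rmult_le_pos; [exact: hp.1 | exact: hw.1].
Qed.

Lemma reach_add s m1 m2 (A : {set 'I_n}) : reach s (m1 + m2) A = reach s m1 (reach (s + m1) m2 A).
Proof.
elim: m2 A => [|m2 IH] A; first by rewrite addn0.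
by rewrite addnS /= IH; congr (reach s m1 (reach (s+m1) m2 (Fd (P _) d A))); lia.
Qed.

Definition Good s m g := forall A B : {set 'I_n}, A != set0 -> B != set0 ->
  reach s m A :&: reach s m B = set0 -> (#|A :|: B| + g <= #|reach s m A :|: reach s m B|)%nat.

Lemma Good_comp s m1 m2 g1 g2 : Good s m1 g1 -> Good (s + m1) m2 g2 -> Good s (m1 + m2) (g1 + g2).
Proof.
move=> G1 G2 A B nA nB; rewrite !reach_add => hI.
have nA' := reach_ne (s + m1) m2 nA; have nB' := reach_ne (s + m1) m2 nB.
have h1 := G1 _ _ nA' nB' hI.
have hI' : reach (s + m1) m2 A :&: reach (s + m1) m2 B = set0.
  case: (eqVneq (reach (s + m1) m2 A :&: reach (s + m1) m2 B) set0) => // h.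
  by have := reach_meet s m1 h; rewrite hI eqxx.
have h2 := G2 _ _ nA nB hI'.
lia.
Qed.

Lemma disj_of (A B : {set 'I_n}) : A :&: B = set0 -> [disjoint A & B].
Proof. by move=> h; rewrite -setI_eq0 h. Qed.

Lemma Good1 s : Good s 1 0.
Proof.
move=> A B nA nB /= hI; rewrite addn0.
apply: TW => //; first by rewrite addn1.
apply: disj_of; case: (eqVneq (A :&: B) set0) => // h.
by have := Fd_meet (Pst s 0) h; rewrite hI eqxx.
Qed.

Lemma Good1S s : isS (s + 1) -> Good s 1 1.
Proof.
move=> hS A B nA nB /= hI; rewrite addn1.
apply: TS => //.
apply: disj_of; case: (eqVneq (A :&: B) set0) => // h.
by have := Fd_meet (Pst s 0) h; rewrite hI eqxx.
Qed.

Lemma Good0 s m : Good s m 0.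
Proof.
elim: m s => [|m IH] s.
  by move=> A B _ _ /=; rewrite addn0.
rewrite -add1n -[0%nat]/(0 + 0)%nat; apply: Good_comp; first exact: Good1.
exact: IH.
Qed.

Lemma GoodS s m x : (s < x)%nat -> (x <= s + m)%nat -> isS x -> Good s m 1.
Proof.
move=> h1 h2 hS.
have E : m = ((x - 1 - s) + 1 + (s + m - x))%nat by lia.
rewrite E -[1%nat]/(0 + 1 + 0)%nat; apply: Good_comp; last exact: Good0.
apply: Good_comp; first exact: Good0.
apply: Good1S; have -> : (s + (x - 1 - s) + 1 = x)%nat by lia.
exact: hS.
Qed.

Lemma scramble s m : Good s m n -> forall i i', exists l, d ^ m <= wprod s m i l /\ d ^ m <= wprod s m i' l.
Proof.
move=> G i i'.
have ni : [set i] != set0 by apply/set0Pn; exists i; exact: set11.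
have ni' : [set i'] != set0 by apply/set0Pn; exists i'; exact: set11.
have : reach s m [set i] :&: reach s m [set i'] != set0.
  apply/eqP => hI; have := G _ _ ni ni' hI.
  have c1 : (1 <= #|[set i] :|: [set i']|)%nat.
    by rewrite card_gt0; apply/set0Pn; exists i; rewrite !inE eqxx.
  have c2 : (#|reach s m [set i] :|: reach s m [set i']| <= n)%nat.
    by rewrite -[X in (_ <= X)%nat]card_ord; exact: max_card.
  move=> h; exact: nat_contra c1 h c2.
case/set0Pn => l; rewrite inE => /andP [h1 h2].
have [a [ha w1]] := reach_prod h1; have [b [hb w2]] := reach_prod h2.
move: ha hb; rewrite !inE => /eqP ha /eqP hb; subst a b.
by exists l.
Qed.

End Window.

Lemma pow_dec x m k : 0 <= x <= 1 -> (m <= k)%nat -> x ^ k <= x ^ m.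
Proof.
move=> hx hmk; have -> : k = (m + (k - m))%nat by lia.
rewrite pow_add; have h1 : x ^ (k - m) <= 1 by rewrite -(pow1 (k - m)); apply: pow_incr; lra.
have h2 : 0 <= x ^ m by apply: pow_le; lra.
have h3 : 0 <= x ^ (k - m) by apply: pow_le; lra.
nra.
Qed.

Lemma cv_ge0 (u : nat -> R) l : Un_cv u l -> (forall t, 0 <= u t) -> 0 <= l.
Proof.
move=> H h; apply: Rnot_lt_le => hl.
have [N HN] := H (- l) ltac:(lra).
have := HN N (le_n N); rewrite /Rdist => /Rabs_def2 [h1 h2].
have := h N; lra.
Qed.

Section Col.
Variable n : nat.
Variable i0 : 'I_n.

Definition cmax (v : 'I_n -> R) := foldr (fun i acc => Rmax (v i) acc) (v i0) (enum 'I_n).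
Definition cmin (v : 'I_n -> R) := - cmax (fun i => - v i).

Lemma cmax_ge v i : v i <= cmax v.
Proof.
rewrite /cmax; have : i \in enum 'I_n by rewrite mem_enum.
elim: (enum 'I_n) => [|x s IH] //=; rewrite in_cons => /orP [/eqP -> | hs].
  exact: Rmax_l.
apply: Rle_trans (IH hs) _; exact: Rmax_r.
Qed.

Lemma cmax_le v b : (forall i, v i <= b) -> cmax v <= b.
Proof.
move=> H; rewrite /cmax; elim: (enum 'I_n) => [|x s IH] //=; exact: Rmax_lub.
Qed.

Lemma cmax_att v : exists i, cmax v = v i.
Proof.
rewrite /cmax; elim: (enum 'I_n) => [|x s [i IH]] /=; first by exists i0.
rewrite IH; apply: (Rmax_case (v x) (v i) (fun y => exists i, y = v i)); [by exists x | by exists i].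
Qed.

Lemma cmin_le v i : cmin v <= v i.
Proof. rewrite /cmin; have := cmax_ge (fun i => - v i) i; lra. Qed.

Lemma cmin_ge v a : (forall i, a <= v i) -> a <= cmin v.
Proof. move=> H; rewrite /cmin; have := cmax_le (v := fun i => - v i) (b := - a) ltac:(move=> i; have := H i; lra); lra. Qed.

Lemma cmin_att v : exists i, cmin v = v i.
Proof. rewrite /cmin; have [i ->] := cmax_att (fun i => - v i); exists i; ring. Qed.

End Col.

Section Main.
Variable n : nat.
Hypothesis Hn : (0 < n)%nat.
Variable P : nat -> Mat n.
Hypothesis HPst : forall t, (1 <= t)%nat -> stochastic (P t).
Variable j : nat -> nat.
Hypothesis Hj1 : (1 <= j 1)%nat.
Hypothesis Hjinc : forall r, (1 <= r)%nat -> (j r < j r.+1)%nat.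
Variable T : nat.
Hypothesis HT : forall r, (1 <= r)%nat -> (j r.+1 - j r <= T)%nat.
Variable d : R.
Hypothesis Hd0 : 0 < d.
Hypothesis Hd1 : d <= / (INR n + 1).
Hypothesis TW : forall t, (1 <= t)%nat -> forall A B : {set 'I_n}, A != set0 -> B != set0 -> [disjoint A & B] ->
  Fd (P t) d A :&: Fd (P t) d B = set0 -> (#|A :|: B| <= #|Fd (P t) d A :|: Fd (P t) d B|)%nat.
Definition isSj t := exists r, (1 <= r)%nat /\ t = j r.
Hypothesis TS : forall t, isSj t -> forall A B : {set 'I_n}, A != set0 -> B != set0 -> [disjoint A & B] ->
  Fd (P t) d A :&: Fd (P t) d B = set0 -> (#|A :|: B| < #|Fd (P t) d A :|: Fd (P t) d B|)%nat.

Lemma jmono a q : (1 <= a)%nat -> (j a + q <= j (a + q))%nat.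
Proof.
move=> ha; elim: q => [|q IH]; first by rewrite !addn0.
have := Hjinc (r := (a + q)%nat) ltac:(lia); rewrite (addnS a q); lia.
Qed.

Lemma jgap a q : (1 <= a)%nat -> (j (a + q) - j a <= q * T)%nat.
Proof.
move=> ha; elim: q => [|q IH]; first by rewrite addn0 subnn.
have h1 := HT (r := (a + q)%nat) ltac:(lia).
have h2 := jmono q ha.
have h3 := Hjinc (r := (a + q)%nat) ltac:(lia).
rewrite (addnS a q) mulSn; lia.
Qed.

Lemma Good_seg a q : (1 <= a)%nat -> Good P d (j a - 1) (j (a + q) - j a) q.
Proof.
move=> ha; elim: q => [|q IH]; first by rewrite addn0 subnn; exact: (Good0 Hd1 HPst TW).
have h2 := jmono q ha.
have h3 := Hjinc (r := (a + q)%nat) ltac:(lia).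
have hj : (1 <= j a)%nat by have := jmono 0 ha; have := jmono (a - 1) (leqnn 1); rewrite subnKC //; lia.
have E1 : (j (a + q.+1) - j a = (j (a + q) - j a) + (j (a + q.+1) - j (a + q)))%nat.
  rewrite (addnS a q); lia.
rewrite E1 -[X in Good _ _ _ _ X]addn1.
have G2 : Good P d (j a - 1 + (j (a + q) - j a)) (j (a + q.+1) - j (a + q)) 1.
  have -> : (j a - 1 + (j (a + q) - j a) = j (a + q) - 1)%nat by lia.
  apply: (GoodS Hd1 HPst TW TS (x := j (a + q))); try lia.
    rewrite (addnS a q); lia.
  by exists (a + q)%nat; split => //; lia.
exact: (Good_comp Hd1 HPst IH G2).
Qed.


Definition ai r := (1 + r * n)%nat.
Definition bw r := (j (ai r) - 1)%nat.
Definition lw r := (j (ai r.+1) - j (ai r))%nat.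

Lemma ai_succ r : ai r.+1 = (ai r + n)%nat.
Proof. rewrite /ai mulSn; lia. Qed.

Lemma ai_ge1 r : (1 <= ai r)%nat.
Proof. rewrite /ai; lia. Qed.

Lemma jai_ge1 r : (1 <= j (ai r))%nat.
Proof.
have := jmono (ai r - 1) (leqnn 1); rewrite subnKC ?ai_ge1 //; lia.
Qed.

Lemma window r : Good P d (bw r) (lw r) n.
Proof. by rewrite /bw /lw ai_succ; apply: Good_seg; exact: ai_ge1. Qed.

Lemma lw_le r : (lw r <= n * T)%nat.
Proof. by rewrite /lw ai_succ; apply: jgap; exact: ai_ge1. Qed.

Lemma bw_succ r : bw r.+1 = (bw r + lw r)%nat.
Proof.
rewrite /bw /lw; have h1 := jai_ge1 r; have h2 := jmono n (ai_ge1 r).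
rewrite -ai_succ in h2; lia.
Qed.

Lemma bw_ge r : (r <= bw r)%nat.
Proof.
rewrite /bw; have h := jmono (r * n) (leqnn 1).
have h2 : (r <= r * n)%nat by rewrite leq_pmulr.
rewrite /ai; lia.
Qed.

Definition gam := d ^ (n * T).

Lemma d_le1 : d <= 1.
Proof.
have h := pos_INR n; apply: Rle_trans Hd1 _.
rewrite -Rinv_1; apply: Rinv_le_contravar; lra.
Qed.

Lemma gam_pos : 0 < gam.
Proof. exact: pow_lt. Qed.

Lemma gam_le1 : gam <= 1.
Proof. rewrite /gam -(pow1 (n * T)); apply: pow_incr; have := d_le1; lra. Qed.

Lemma scr r i i' : exists l, gam <= wprod P (bw r) (lw r) i l /\ gam <= wprod P (bw r) (lw r) i' l.
Proof.
have W : Good P d (bw r) (lw r) n by exact: window.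
have [l [h1 h2]] := @scramble _ _ _ Hd0 HPst _ _ W i i'.
have hd := d_le1.
have hg : gam <= pow d (lw r).
  apply: pow_dec; first lra.
  exact: lw_le.
exists l; split; lra.
Qed.

Variable i0 : 'I_n.
Variable k : 'I_n.

Definition V t := lprod P t.
Definition hi t := cmax i0 (fun i => V t i k).
Definition lo t := cmin i0 (fun i => V t i k).
Definition D t := hi t - lo t.

Lemma Vst t : stochastic (V t).
Proof.
elim: t => [|t IH]; first exact: idm_stoch.
by apply: mmul_stoch => //; apply: HPst.
Qed.

Lemma hi_mono s m : hi (s + m) <= hi s.
Proof.
apply: cmax_le => i; rewrite /V lprod_split.
apply: stoch_ub; first exact: wprod_stoch.
move=> l; exact: (cmax_ge i0 (fun i => V s i k) l).
Qed.

Lemma lo_mono s m : lo s <= lo (s + m).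
Proof.
apply: cmin_ge => i; rewrite /V lprod_split.
apply: stoch_lb; first exact: wprod_stoch.
move=> l; exact: (cmin_le i0 (fun i => V s i k) l).
Qed.

Lemma lo_hi t i : lo t <= V t i k <= hi t.
Proof. split; [exact: (cmin_le i0 (fun i => V t i k) i) | exact: (cmax_ge i0 (fun i => V t i k) i)]. Qed.

Lemma D_mono s m : D (s + m) <= D s.
Proof. rewrite /D; have := hi_mono s m; have := lo_mono s m; lra. Qed.

Lemma D_ge0 t : 0 <= D t.
Proof. rewrite /D; have := lo_hi t i0; lra. Qed.

Lemma D_contr r : D (bw r.+1) <= (1 - gam) * D (bw r).
Proof.
rewrite /D /hi /lo bw_succ.
have [i1 ->] := cmax_att i0 (fun i => V (bw r + lw r) i k).
have [i2 ->] := cmin_att i0 (fun i => V (bw r + lw r) i k).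
rewrite /V !lprod_split.
apply: contract; first exact: wprod_stoch.
  move=> l; exact: lo_hi.
exact: scr.
Qed.

Lemma D_pow r : D (bw r) <= (1 - gam) ^ r * D (bw 0).
Proof.
elim: r => [|r IH] /=; first lra.
apply: Rle_trans (D_contr r) _.
have := gam_le1; have := gam_pos => g1 g2.
rewrite Rmult_assoc; apply: Rmult_le_compat_l; lra.
Qed.

Lemma col_cv : exists c, forall i, Un_cv (fun t => V t i k) c.
Proof.
have Hg : Un_growing lo by move=> t; rewrite -addn1; exact: lo_mono.
have Hb : has_ub lo.
  exists (hi 0) => x [t ->]; have := lo_hi t i0; have := hi_mono 0 t; rewrite add0n; lra.
have [c Hc] := growing_cv _ Hg Hb.
exists c => i eps heps.
have [N1 HN1] := Hc (eps / 2) ltac:(lra).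
have hD0 := D_ge0 (bw 0).
have [Nr HNr] := pow_lt_1_zero (1 - gam) ltac:(have := gam_pos; have := gam_le1; move=> *; rewrite Rabs_right; lra)
   (eps / 2 / (D (bw 0) + 1)) ltac:(apply: Rdiv_lt_0_compat; lra).
exists (maxn N1 (bw Nr)) => t ht.
have ht' : (maxn N1 (bw Nr) <= t)%nat by apply/leP.
have ht1 : (N1 <= t)%coq_nat by apply/leP; exact: leq_trans (leq_maxl _ _) ht'.
have ht2 : (bw Nr <= t)%nat by exact: leq_trans (leq_maxr _ _) ht'.
have h1 := HN1 t ht1; rewrite /Rdist in h1 *.
have h2 : D t <= D (bw Nr) by have := D_mono (bw Nr) (t - bw Nr); rewrite subnKC.
have h3 := D_pow Nr.
have h4 := HNr Nr (le_n Nr); rewrite Rabs_right in h4; last first.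
  by apply: Rle_ge; apply: pow_le; have := gam_le1; lra.
have h5 : (1 - gam) ^ Nr * D (bw 0) <= eps / 2 / (D (bw 0) + 1) * D (bw 0).
  by apply: Rmult_le_compat_r; lra.
have h6 : eps / 2 / (D (bw 0) + 1) * D (bw 0) < eps / 2.
  apply: (Rmult_lt_reg_r (D (bw 0) + 1)); first lra.
  field_simplify; [nra | lra].
have h7 := lo_hi t i.
rewrite /D in h2 h3 h5 h6 *.
apply: Rabs_def1; have := Rabs_def2 _ _ h1 => - [] *; lra.
Qed.

End Main.

Lemma lprod_stoch n (P : nat -> Mat n) : (forall t, (1 <= t)%nat -> stochastic (P t)) ->
  forall t, stochastic (lprod P t).
Proof.
move=> H; elim => [|t IH]; first exact: idm_stoch.
by apply: mmul_stoch => //; apply: H.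
Qed.

Lemma main_thm (n : nat) (Hn : (0 < n)%nat)
  (PP : Mat n -> Prop) (HPW : forall M, PP M -> classW M) (HPc : mat_compact PP)
  (P : nat -> Mat n) (HP : forall k, (1 <= k)%nat -> PP (P k))
  (j : nat -> nat) (Hj1 : (1 <= j 1)%nat)
  (Hjinc : forall r, (1 <= r)%nat -> (j r < j r.+1)%nat)
  (HjS : forall r, (1 <= r)%nat -> Sarymsakov (P (j r)))
  (Hjc : mat_compact (fun M => exists r, (1 <= r)%nat /\ M = P (j r)))
  (T : nat) (HT : forall r, (1 <= r)%nat -> (j r.+1 - j r <= T)%nat) :
  exists c : 'I_n -> R,
    (forall i, (0 <= c i)%R) /\ rsum c = R1 /\
    (forall i k, Un_cv (fun t => lprod P t i k) (c k)).
Proof.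
have HPst : forall t, (1 <= t)%nat -> stochastic (P t) by move=> t h; exact: (HPW _ (HP t h)).1.
have [dW [dW0 QW]] : exists d, 0 < d /\ forall x : {set 'I_n} * {set 'I_n},
    Qp PP (fun a b => is_true (a <= b)%nat) x.1 x.2 d.
  apply: fin_min.
    move=> x d1 d2 Q h0 hle M SM d' d'0 d'le; apply: Q SM d' d'0 (Rle_trans _ _ _ d'le hle).
  move=> x; apply: thr_pair => //.
    by move=> a b b' h h'; exact: leq_trans h h'.
  move=> M SM A B nA nB dAB hI.
  case: ((HPW _ SM).2 A B nA nB dAB) => [h | [_ h]] //.
  by rewrite hI eqxx in h.
have [dS [dS0 QS]] : exists d, 0 < d /\ forall x : {set 'I_n} * {set 'I_n},
    Qp (fun M => exists r, (1 <= r)%nat /\ M = P (j r)) (fun a b => is_true (a < b)%nat) x.1 x.2 d.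
  apply: fin_min.
    move=> x d1 d2 Q h0 hle M SM d' d'0 d'le; apply: Q SM d' d'0 (Rle_trans _ _ _ d'le hle).
  move=> x; apply: thr_pair => //.
    by move=> a b b' h h'; exact: leq_trans h h'.
  move=> M [r [hr ->]] A B nA nB dAB hI.
  case: ((HjS _ hr).2 A B nA nB dAB) => [h | [_ h]] //.
  by rewrite hI eqxx in h.
pose dl := Rmin (Rmin dW dS) (/ (INR n + 1)).
have hn1 : 0 < / (INR n + 1) by apply: Rinv_0_lt_compat; have := pos_INR n; lra.
have dl0 : 0 < dl by apply: Rmin_pos => //; apply: Rmin_pos.
have dl1 : dl <= / (INR n + 1) by apply: Rmin_r.
have dlW : dl <= dW by apply: Rle_trans (Rmin_l _ _) (Rmin_l _ _).
have dlS : dl <= dS by apply: Rle_trans (Rmin_l _ _) (Rmin_r _ _).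
have TW : forall t, (1 <= t)%nat -> forall A B : {set 'I_n}, A != set0 -> B != set0 -> [disjoint A & B] ->
  Fd (P t) dl A :&: Fd (P t) dl B = set0 -> (#|A :|: B| <= #|Fd (P t) dl A :|: Fd (P t) dl B|)%nat.
  by move=> t ht A B; exact: (QW (A, B) (P t) (HP t ht) dl dl0 dlW).
have TS : forall t, isSj j t -> forall A B : {set 'I_n}, A != set0 -> B != set0 -> [disjoint A & B] ->
  Fd (P t) dl A :&: Fd (P t) dl B = set0 -> (#|A :|: B| < #|Fd (P t) dl A :|: Fd (P t) dl B|)%nat.
  by move=> t [r [hr ->]] A B; exact: (QS (A, B) (P (j r)) (ex_intro _ r (conj hr erefl)) dl dl0 dlS).
pose i0 : 'I_n := Ordinal Hn.
have Hcol : forall k : 'I_n, exists c, forall i, Un_cv (fun t => lprod P t i k) c.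
  move=> k; exact: (col_cv Hn HPst Hj1 Hjinc HT dl0 dl1 TW TS i0 k).
have [c Hc] := fin_all_exists Hcol.
have Hst := lprod_stoch HPst.
exists c; split; [|split].
- move=> k; apply: (cv_ge0 (Hc k i0)) => t; exact: (Hst t).1.
- have cv := bsum_cv (index_enum 'I_n) (fun k => Hc k i0).
  have cv1 : Un_cv (fun t => \big[Rplus/R0]_(k <- index_enum 'I_n) lprod P t i0 k) 1.
    move=> e he; exists 0%nat => t _; rewrite /Rdist; have := (Hst t).2 i0; rewrite /rsum => ->.
    by rewrite Rminus_eq_0 Rabs_R0.
  exact: (UL_sequence _ _ _ cv cv1).
- by move=> i k; exact: Hc.
Qed.

Close Scope R_scope.

Theorem theorem6 (n : nat) (Hn : (0 < n)%N)
  (PP : Mat n -> Prop) (HPW : forall M, PP M -> classW M) (HPc : mat_compact PP)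
  (P : nat -> Mat n) (HP : forall k, (1 <= k)%N -> PP (P k))
  (j : nat -> nat) (Hj1 : (1 <= j 1)%N)
  (Hjinc : forall r, (1 <= r)%N -> (j r < j r.+1)%N)
  (HjS : forall r, (1 <= r)%N -> Sarymsakov (P (j r)))
  (Hjc : mat_compact (fun M => exists r, (1 <= r)%N /\ M = P (j r)))
  (T : nat) (HT : forall r, (1 <= r)%N -> (j r.+1 - j r <= T)%N) :
  exists c : 'I_n -> R,
    (forall i, (0 <= c i)%R) /\ rsum c = R1 /\
    (forall i k, Un_cv (fun t => lprod P t i k) (c k)).
Proof. exact: (main_thm Hn HPW HPc HP Hj1 Hjinc HjS Hjc HT). Qed.
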